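(* Fix $\epsilon\in(0,\pi)$ and choose $\delta\in(0,1)$ such that $\frac{-2\delta^2-2\delta+4}{\delta^2+10\delta+4}\ge\cos\epsilon$. Then for any $x=(x_1,\dots,x_6)\in\mathbb{R}^6_{>1}$ with $\max_{2\le i\le6}x_i\le2$ and $x_1=1+\delta$, $$\phi(x)\ge\frac{-2\delta^2-2\delta+4}{\delta^2+10\delta+4}\ge\cos\epsilon,$$ so in particular the angle $\alpha=\arccos(\max\{-1,\min\{\phi(x),1\}\})$ satisfies $\cos\alpha\ge\cos\epsilon$.
   Context: For $x=(x_1,\dots,x_6)\in\mathbb{R}^6_{\ge1}$ define $$\phi(x)=\frac{x_2x_3+x_5x_6+x_1x_2x_5+x_1x_3x_6-x_1^2x_4+x_4}{\sqrt{2x_1x_2x_6+x_1^2+x_2^2+x_6^2-1}\sqrt{2x_1x_3x_5+x_1^2+x_3^2+x_5^2-1}}.$$ (This is the cosine of the extended dihedral angle at edge $e_1$ of a generalized hyper-ideal tetrahedron whose edges have cosh-lengths $x_1,\dots,x_6$, with $e_{i+3}$ opposite $e_i$.) *)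

(* Defs.v *)
From Stdlib Require Import Reals.
Open Scope R_scope.

(* phi(x) : cosine of the extended dihedral angle at edge e1. *)
Definition phi (x1 x2 x3 x4 x5 x6 : R) : R :=
  (x2*x3 + x5*x6 + x1*x2*x5 + x1*x3*x6 - x1^2*x4 + x4) /
  (sqrt (2*x1*x2*x6 + x1^2 + x2^2 + x6^2 - 1) *
   sqrt (2*x1*x3*x5 + x1^2 + x3^2 + x5^2 - 1)).

Definition bnd (d : R) : R := (-2*d^2 - 2*d + 4) / (d^2 + 10*d + 4).

Definition alpha_of (t : R) : R := acos (Rmax (-1) (Rmin t 1)).

(* Main.v *)
Require Import Defs.
From Stdlib Require Import Reals Lra Psatz.
Open Scope R_scope.

Lemma aux1 (e x5 x6 : R) :
  0 < e < 1 -> 1 < x5 -> 1 < x6 -> x5 <= 2 -> x6 <= 2 ->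
  (2+e)^2 * (x5*x6+2) <= 3 * ((1 + (1+e)*x6) * (1 + (1+e)*x5)).
Proof.
  intros He H5 H6 H5' H6'.
  set (y := 1+e). set (s := x5 - 1). set (t := x6 - 1).
  assert (E1 : 3 * ((1 + y*x6) * (1 + y*x5)) - (1+y)^2 * (x5*x6+2)
    = (2*y^2+y-1)*(s+t) + (2*y^2-2*y-1)*(s*t)) by (unfold s, t; ring).
  assert (Ey : 2+e = 1+y) by (unfold y; ring).
  rewrite Ey.
  assert (hs : 0 <= s) by (unfold s; lra).
  assert (ht : 0 <= t) by (unfold t; lra).
  assert (ht1 : t <= 1) by (unfold t; lra).
  assert (hy : 1 < y < 2) by (unfold y; lra).
  assert (hst : 0 <= s*t) by (apply Rmult_le_pos; lra).
  assert (hst2 : s*t <= s) by (assert (s*t <= s*1) by (apply Rmult_le_compat_l; lra); lra).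
  assert (c2 : -1 <= 2*y^2-2*y-1) by (assert (0 <= y*(y-1)) by (apply Rmult_le_pos; lra); nra).
  assert (c1 : 2 <= 2*y^2+y-1) by nra.
  assert (h : - (s*t) <= (2*y^2-2*y-1)*(s*t)).
  { assert ((-1)*(s*t) <= (2*y^2-2*y-1)*(s*t)) by (apply Rmult_le_compat_r; lra). lra. }
  assert (h2 : 2*(s+t) <= (2*y^2+y-1)*(s+t)) by (apply Rmult_le_compat_r; lra).
  lra.
Qed.

Lemma key_poly (e x2 x3 x4 x5 x6 : R) :
  0 < e < 1 -> 1 < x2 -> 1 < x3 -> 1 < x4 -> 1 < x5 -> 1 < x6 ->
  x2 <= 2 -> x3 <= 2 -> x4 <= 2 -> x5 <= 2 -> x6 <= 2 ->
  (-2*e^2 - 2*e + 4) * ((x2 + (1+e)*x6) * (x3 + (1+e)*x5)) <=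
  (x2*x3 + x5*x6 + (1+e)*x2*x5 + (1+e)*x3*x6 - (1+e)^2*x4 + x4) * (e^2 + 10*e + 4).
Proof.
  intros He H2 H3 H4 H5 H6 H2' H3' H4' H5' H6'.
  set (P := x2 + (1+e)*x6). set (Q := x3 + (1+e)*x5).
  assert (HN : x2*x3 + x5*x6 + (1+e)*x2*x5 + (1+e)*x3*x6 - (1+e)^2*x4 + x4
               = P*Q - e*(2+e)*(x5*x6+x4)) by (unfold P, Q; ring).
  rewrite HN.
  assert (HP : 1 + (1+e)*x6 <= P) by (unfold P; lra).
  assert (HQ : 1 + (1+e)*x5 <= Q) by (unfold Q; lra).
  assert (Hpq : (1 + (1+e)*x6) * (1 + (1+e)*x5) <= P * Q).
  { apply Rmult_le_compat; try lra.
    - assert (0 <= (1+e)*x6) by (apply Rmult_le_pos; lra). lra.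
    - assert (0 <= (1+e)*x5) by (apply Rmult_le_pos; lra). lra. }
  pose proof (aux1 e x5 x6 He H5 H6 H5' H6') as A1.
  set (X := (1 + (1+e)*x6) * (1 + (1+e)*x5)) in *.
  set (W := x5*x6).
  assert (hW : 0 <= W) by (unfold W; apply Rmult_le_pos; lra).
  assert (hden : e^2 + 10*e + 4 <= (e+4)*(2+e)) by nra.
  assert (Hk : (2+e)*(e^2+10*e+4)*(W+x4) <= 3*(e+4)*(P*Q)).
  { assert (s1 : (2+e)*(e^2+10*e+4)*(W+x4) <= (2+e)*((e+4)*(2+e))*(W+2)).
    { apply Rmult_le_compat.
      - assert (0 <= e^2+10*e+4) by nra. apply Rmult_le_pos; lra.
      - lra.
      - apply Rmult_le_compat_l; lra.
      - lra. }
    assert (s2 : (e+4)*((2+e)^2*(W+2)) <= (e+4)*(3*X)).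
    { apply Rmult_le_compat_l; [lra|]. unfold W; lra. }
    assert (s3 : (e+4)*(3*X) <= (e+4)*(3*(P*Q))).
    { apply Rmult_le_compat_l; lra. }
    assert (E : (2+e)*((e+4)*(2+e))*(W+2) = (e+4)*((2+e)^2*(W+2))) by ring.
    lra. }
  assert (Hk2 : e*((2+e)*(e^2+10*e+4)*(W+x4)) <= e*(3*(e+4)*(P*Q)))
    by (apply Rmult_le_compat_l; lra).
  assert (E : (P * Q - e * (2 + e) * (W + x4)) * (e ^ 2 + 10 * e + 4)
     - (-2*e^2 - 2*e + 4) * (P*Q) = e*(3*(e+4)*(P*Q)) - e*((2+e)*(e^2+10*e+4)*(W+x4))) by ring.
  unfold W in *. lra.
Qed.

Lemma sqrt_bound (x1 a b : R) : 1 < x1 -> 1 < a -> 1 < b ->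
  0 < 2*x1*a*b + x1^2 + a^2 + b^2 - 1 /\
  sqrt (2*x1*a*b + x1^2 + a^2 + b^2 - 1) <= a + x1*b.
Proof.
  intros h1 ha hb.
  assert (E : 2*x1*a*b + x1^2 + a^2 + b^2 - 1 = (a + x1*b)^2 - (x1^2-1)*(b^2-1)) by ring.
  assert (p1 : 0 < x1^2 - 1) by nra.
  assert (p2 : 0 < b^2 - 1) by nra.
  assert (p3 : 0 < (x1^2-1)*(b^2-1)) by (apply Rmult_lt_0_compat; lra).
  assert (p4 : 0 < x1*a*b) by (repeat apply Rmult_lt_0_compat; lra).
  split; [nra|].
  rewrite <- (sqrt_pow2 (a + x1*b)) by (assert (0 < x1*b) by (apply Rmult_lt_0_compat; lra); lra).
  apply sqrt_le_1_alt. lra.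
Qed.

Theorem lemma3p3 (eps delta : R) :
  0 < eps < PI ->
  0 < delta < 1 ->
  bnd delta >= cos eps ->
  forall x1 x2 x3 x4 x5 x6 : R,
    1 < x1 -> 1 < x2 -> 1 < x3 -> 1 < x4 -> 1 < x5 -> 1 < x6 ->
    x2 <= 2 -> x3 <= 2 -> x4 <= 2 -> x5 <= 2 -> x6 <= 2 ->
    x1 = 1 + delta ->
    phi x1 x2 x3 x4 x5 x6 >= bnd delta /\ bnd delta >= cos eps /\
    cos (alpha_of (phi x1 x2 x3 x4 x5 x6)) >= cos eps.
Proof.
  intros Heps Hd Hb x1 x2 x3 x4 x5 x6 H1 H2 H3 H4 H5 H6 H2' H3' H4' H5' H6' Hx1.
  assert (Hden : 0 < delta^2 + 10*delta + 4) by nra.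
  assert (Hnum : 0 < -2*delta^2 - 2*delta + 4) by nra.
  assert (Hb0 : 0 < bnd delta) by (unfold bnd; apply Rdiv_lt_0_compat; lra).
  assert (Hb1 : bnd delta <= 1).
  { unfold bnd. apply (Rmult_le_reg_r (delta^2 + 10*delta + 4)); [lra|].
    unfold Rdiv. rewrite Rmult_assoc, Rinv_l by lra. nra. }
  assert (Hphi : bnd delta <= phi x1 x2 x3 x4 x5 x6).
  { destruct (sqrt_bound x1 x2 x6 H1 H2 H6) as [A0 A1].
    destruct (sqrt_bound x1 x3 x5 H1 H3 H5) as [B0 B1].
    pose proof (key_poly delta x2 x3 x4 x5 x6 Hd H2 H3 H4 H5 H6 H2' H3' H4' H5' H6') as K.
    rewrite <- Hx1 in K.
    set (A := 2*x1*x2*x6 + x1^2 + x2^2 + x6^2 - 1) in *.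
    set (B := 2*x1*x3*x5 + x1^2 + x3^2 + x5^2 - 1) in *.
    set (N := x2*x3 + x5*x6 + x1*x2*x5 + x1*x3*x6 - x1^2*x4 + x4) in *.
    assert (Hsa : 0 < sqrt A) by (apply sqrt_lt_R0; lra).
    assert (Hsb : 0 < sqrt B) by (apply sqrt_lt_R0; lra).
    assert (HD : sqrt A * sqrt B <= (x2 + x1*x6) * (x3 + x1*x5))
      by (apply Rmult_le_compat; lra).
    assert (HbPQ : bnd delta * ((x2 + x1*x6) * (x3 + x1*x5)) <= N).
    { unfold bnd. unfold Rdiv.
      apply (Rmult_le_reg_r (delta^2 + 10*delta + 4)); [lra|].
      replace ((-2 * delta ^ 2 - 2 * delta + 4) * / (delta ^ 2 + 10 * delta + 4) *
        ((x2 + x1 * x6) * (x3 + x1 * x5)) * (delta ^ 2 + 10 * delta + 4))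
        with ((-2 * delta ^ 2 - 2 * delta + 4) * ((x2 + x1 * x6) * (x3 + x1 * x5)))
        by (field; lra).
      subst x1. exact K. }
    assert (HbD : bnd delta * (sqrt A * sqrt B) <= N).
    { assert (bnd delta * (sqrt A * sqrt B) <= bnd delta * ((x2 + x1*x6) * (x3 + x1*x5)))
        by (apply Rmult_le_compat_l; lra). lra. }
    unfold phi. fold A B N.
    assert (0 < sqrt A * sqrt B) by (apply Rmult_lt_0_compat; lra).
    apply (Rmult_le_reg_r (sqrt A * sqrt B)); [lra|].
    unfold Rdiv. rewrite Rmult_assoc, Rinv_l by lra. lra. }
  split; [lra|]. split; [exact Hb|].
  unfold alpha_of.
  set (t := phi x1 x2 x3 x4 x5 x6) in *.
  assert (Hm : bnd delta <= Rmin t 1) by (apply Rmin_glb; lra).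
  assert (Hm2 : Rmin t 1 <= 1) by apply Rmin_r.
  assert (Hc1 : -1 <= Rmax (-1) (Rmin t 1)) by apply Rmax_l.
  assert (Hc2 : Rmax (-1) (Rmin t 1) <= 1) by (apply Rmax_lub; lra).
  assert (Hc3 : Rmin t 1 <= Rmax (-1) (Rmin t 1)) by apply Rmax_r.
  rewrite cos_acos by lra. lra.
Qed.
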